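(* Let $d>0$ and fix a robot $i$ with position $p_i(t)\in\mathbb{R}^3$ obeying $\dot p_i(t)=v_{io}(t)$. Let $p_i^o:\mathbb{R}_{\ge0}\to\mathbb{R}^3$ be the position of the nearest obstacle (or teammate) of robot $i$, with velocity $v_i^o=\dot p_i^o$, and assume $p_i(t)\neq p_i^o(t)$ along the motion. Define $\rho_{io}=\tfrac12\|p_i-p_i^o\|^2$, the task error $\tilde\rho_{io}=\tfrac{d^2}{2}-\rho_{io}$, the row vectors $J_{io}=(p_i-p_i^o)^\top$, $J_i^o=-(p_i-p_i^o)^\top$, and $J_{io}^\dagger=(p_i-p_i^o)/\|p_i-p_i^o\|^2$. Let $\lambda_{io},\beta_1,\beta_2,r_0,r_1,r_2>0$ with $r_1r_0>1$, $r_2r_0<1$, $r_0\in(\tfrac12,1)$, and let the velocity be $$v_{io}=J_{io}^\dagger\Big[\lambda_{io}\big(\beta_1\tilde\rho_{io}^{[r_1]}+\beta_2\tilde\rho_{io}^{[r_2]}\big)^{[r_0]}-J_i^o v_i^o\Big].$$ If $\|p_i(0)-p_i^o(0)\|\le d$, then for any $\tilde\rho_{io}(0)\in\mathbb{R}$ there exists a settling time $T_{i,o}>0$, bounded independently of the initial condition, such that $\|p_i(t)-p_i^o(t)\|\ge d$ for all $t\ge T_{i,o}$ (indeed $\tilde\rho_{io}$ converges to $0$ within this fixed time).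
   Context: For $x,p\in\mathbb{R}$, $x^{[p]}:=|x|^p\,\mathrm{sgn}(x)$. Norms are Euclidean. A settling time is ''fixed'' if it is bounded by a constant independent of initial conditions. *)

(* Defs.v *)
From Stdlib Require Import Reals.
From Coquelicot Require Import Coquelicot.
Open Scope R_scope.

Definition vec3 : Type := (R * R * R)%type.
Definition vx (v : vec3) : R := fst (fst v).
Definition vy (v : vec3) : R := snd (fst v).
Definition vz (v : vec3) : R := snd v.
Definition vsub (u v : vec3) : vec3 := (vx u - vx v, vy u - vy v, vz u - vz v).
Definition vscale (a : R) (v : vec3) : vec3 := (a * vx v, a * vy v, a * vz v).
Definition vdot (u v : vec3) : R := vx u * vx v + vy u * vy v + vz u * vz v.
Definition vnorm (v : vec3) : R := sqrt (vdot v v).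

(* Signed power x^[p] := |x|^p sgn(x)  (with 0^[p] = 0). *)
Definition spow (x p : R) : R :=
  if Rlt_dec 0 x then Rpower x p
  else if Rlt_dec x 0 then - Rpower (- x) p else 0.

Definition is_deriv3 (f : R -> vec3) (f' : vec3) (t : R) : Prop :=
  is_derive (fun s => vx (f s)) t (vx f') /\
  is_derive (fun s => vy (f s)) t (vy f') /\
  is_derive (fun s => vz (f s)) t (vz f').

Definition right_cont3 (f : R -> vec3) (t : R) : Prop :=
  filterlim (fun s => vx (f s)) (at_right t) (locally (vx (f t))) /\
  filterlim (fun s => vy (f s)) (at_right t) (locally (vy (f t))) /\
  filterlim (fun s => vz (f s)) (at_right t) (locally (vz (f t))).

Definition rho_io (p po : vec3) : R := / 2 * vdot (vsub p po) (vsub p po).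
Definition rho_tilde (d : R) (p po : vec3) : R := d ^ 2 / 2 - rho_io p po.

Definition J_io (p po w : vec3) : R := vdot (vsub p po) w.
Definition J_i_o (p po w : vec3) : R := - vdot (vsub p po) w.
Definition J_io_dag (p po : vec3) (s : R) : vec3 :=
  vscale (s / (vnorm (vsub p po) ^ 2)) (vsub p po).

Definition v_io (d lam b1 b2 r0 r1 r2 : R) (p po vo : vec3) : vec3 :=
  let rt := rho_tilde d p po in
  J_io_dag p po (lam * spow (b1 * spow rt r1 + b2 * spow rt r2) r0
                 - J_i_o p po vo).

(* Main.v *)
Require Import Defs.
From Stdlib Require Import Reals Lra Psatz.
From Coquelicot Require Import Coquelicot.
Open Scope R_scope.

Lemma D_ext (f : R -> R) (x l l' : R) : is_derive f x l -> l = l' -> is_derive f x l'.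
Proof. intros H <-; exact H. Qed.
Lemma D_minus (f g : R -> R) x a b : is_derive f x a -> is_derive g x b ->
  is_derive (fun s => f s - g s) x (a - b).
Proof. intros Hf Hg. exact (is_derive_minus f g x a b Hf Hg). Qed.
Lemma D_plus (f g : R -> R) x a b : is_derive f x a -> is_derive g x b ->
  is_derive (fun s => f s + g s) x (a + b).
Proof. intros Hf Hg. exact (is_derive_plus f g x a b Hf Hg). Qed.
Lemma D_mult (f g : R -> R) x a b : is_derive f x a -> is_derive g x b ->
  is_derive (fun s => f s * g s) x (a * g x + f x * b).
Proof. intros Hf Hg. exact (is_derive_mult f g x a b Hf Hg Rmult_comm). Qed.
Lemma D_const (c x : R) : is_derive (fun _ => c) x 0.
Proof. exact (is_derive_const c x). Qed.
Lemma D_scal (c : R) f x a : is_derive f x a -> is_derive (fun s => c * f s) x (c * a).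
Proof. apply is_derive_scal. Qed.

Lemma L_plus {T} {F : (T -> Prop) -> Prop} {FF : Filter F} (f g : T -> R) a b :
  filterlim f F (locally a) -> filterlim g F (locally b) ->
  filterlim (fun s => f s + g s) F (locally (a + b)).
Proof. intros Hf Hg. eapply filterlim_comp_2; [exact Hf|exact Hg|].
  exact (@filterlim_plus _ R_NormedModule a b). Qed.
Lemma L_mult {T} {F : (T -> Prop) -> Prop} {FF : Filter F} (f g : T -> R) a b :
  filterlim f F (locally a) -> filterlim g F (locally b) ->
  filterlim (fun s => f s * g s) F (locally (a * b)).
Proof. intros Hf Hg. eapply filterlim_comp_2; [exact Hf|exact Hg|].
  exact (@filterlim_mult R_AbsRing a b). Qed.
Lemma L_opp {T} {F : (T -> Prop) -> Prop} {FF : Filter F} (f : T -> R) a :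
  filterlim f F (locally a) -> filterlim (fun s => - f s) F (locally (- a)).
Proof. intros Hf. eapply filterlim_comp; [exact Hf|].
  exact (@filterlim_opp _ R_NormedModule a). Qed.
Lemma L_minus {T} {F : (T -> Prop) -> Prop} {FF : Filter F} (f g : T -> R) a b :
  filterlim f F (locally a) -> filterlim g F (locally b) ->
  filterlim (fun s => f s - g s) F (locally (a - b)).
Proof. intros Hf Hg. apply L_plus; auto. apply L_opp; auto. Qed.
Lemma L_const {T} {F : (T -> Prop) -> Prop} {FF : Filter F} (c : R) :
  filterlim (fun _ : T => c) F (locally c).
Proof. apply filterlim_const. Qed.

Lemma Rpower_pos x y : 0 < Rpower x y.
Proof. unfold Rpower; apply exp_pos. Qed.

Lemma spow_pos x r : 0 < x -> spow x r = Rpower x r.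
Proof. intros H; unfold spow; destruct (Rlt_dec 0 x); [reflexivity|lra]. Qed.
Lemma spow_neg x r : x < 0 -> spow x r = - Rpower (- x) r.
Proof. intros H; unfold spow; destruct (Rlt_dec 0 x); [lra|].
  destruct (Rlt_dec x 0); [reflexivity|lra]. Qed.
Lemma spow_0 r : spow 0 r = 0.
Proof. unfold spow; destruct (Rlt_dec 0 0); [lra|]. destruct (Rlt_dec 0 0); [lra|reflexivity]. Qed.

Definition phi (b1 b2 r0 r1 r2 x : R) := spow (b1 * spow x r1 + b2 * spow x r2) r0.
Definition psi (b1 b2 r0 r1 r2 y : R) := Rpower (b1 * Rpower y r1 + b2 * Rpower y r2) r0.

Lemma phi_pos b1 b2 r0 r1 r2 y : 0 < b1 -> 0 < b2 -> 0 < y ->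
  phi b1 b2 r0 r1 r2 y = psi b1 b2 r0 r1 r2 y.
Proof. intros H1 H2 Hy. unfold phi, psi. rewrite (spow_pos y r1 Hy), (spow_pos y r2 Hy).
  pose proof (Rpower_pos y r1); pose proof (Rpower_pos y r2).
  rewrite spow_pos by nra. reflexivity. Qed.

Lemma phi_neg b1 b2 r0 r1 r2 x : 0 < b1 -> 0 < b2 -> x < 0 ->
  phi b1 b2 r0 r1 r2 x = - psi b1 b2 r0 r1 r2 (- x).
Proof. intros H1 H2 Hx. unfold phi, psi. rewrite (spow_neg x r1 Hx), (spow_neg x r2 Hx).
  pose proof (Rpower_pos (-x) r1); pose proof (Rpower_pos (-x) r2).
  replace (b1 * - Rpower (- x) r1 + b2 * - Rpower (- x) r2)
    with (- (b1 * Rpower (- x) r1 + b2 * Rpower (- x) r2)) by ring.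
  rewrite spow_neg by nra. rewrite Ropp_involutive. reflexivity. Qed.

Lemma psi_bound b1 b2 r0 r1 r2 y : 0 < b1 -> 0 < b2 -> 0 < r0 -> 0 < y ->
  Rpower b2 r0 * Rpower (y * y) ((1 + r2 * r0) / 2) <= y * psi b1 b2 r0 r1 r2 y.
Proof.
  intros H1 H2 H0 Hy. unfold psi.
  pose proof (Rpower_pos y r1); pose proof (Rpower_pos y r2).
  assert (Hle : Rpower (b2 * Rpower y r2) r0 <= Rpower (b1 * Rpower y r1 + b2 * Rpower y r2) r0).
  { apply Rle_Rpower_l; [lra|]. split; nra. }
  rewrite <- Rpower_mult_distr in Hle by (try apply Rpower_pos; lra).
  rewrite Rpower_mult in Hle.
  rewrite <- Rpower_mult_distr by lra.
  rewrite <- Rpower_plus.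
  replace ((1 + r2 * r0) / 2 + (1 + r2 * r0) / 2) with (1 + r2 * r0) by field.
  rewrite Rpower_plus, Rpower_1 by lra.
  pose proof (Rpower_pos b2 r0).
  pose proof (Rpower_pos y (r2*r0)). nra.
Qed.

Lemma phi_sign b1 b2 r0 r1 r2 x : 0 < b1 -> 0 < b2 -> 0 < r0 -> x <> 0 ->
  Rpower b2 r0 * Rpower (x * x) ((1 + r2 * r0) / 2) <= x * phi b1 b2 r0 r1 r2 x.
Proof.
  intros H1 H2 H0 Hx. destruct (Rlt_dec 0 x).
  - rewrite phi_pos; auto. apply psi_bound; auto.
  - rewrite phi_neg by (auto; lra).
    replace (x * x) with (-x * -x) by ring.
    replace (x * - psi b1 b2 r0 r1 r2 (- x)) with (-x * psi b1 b2 r0 r1 r2 (- x)) by ring.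
    apply psi_bound; auto; lra.
Qed.

Lemma phi_nonneg b1 b2 r0 r1 r2 x : 0 < b1 -> 0 < b2 -> 0 < r0 ->
  0 <= x * phi b1 b2 r0 r1 r2 x.
Proof.
  intros H1 H2 H0. destruct (Req_dec x 0) as [->|Hx]; [lra|].
  eapply Rle_trans; [|apply phi_sign; auto].
  pose proof (Rpower_pos b2 r0); pose proof (Rpower_pos (x*x) ((1 + r2 * r0) / 2)). nra.
Qed.

Lemma cont_of_der (f : R -> R) x l : is_derive f x l -> continuity_pt f x.
Proof. intros H. apply continuity_pt_filterlim. apply (@ex_derive_continuous R_AbsRing R_NormedModule).
  exists l; exact H. Qed.

Lemma mono (f df : R -> R) : (forall t, 0 < t -> is_derive f t (df t)) ->
  (forall t, 0 < t -> df t <= 0) -> forall s t, 0 < s -> s <= t -> f t <= f s.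
Proof.
  intros Hd Hn s t Hs Hst. destruct (Req_dec s t) as [<-|Hne]; [lra|].
  pose proof (MVT_gen f s t df) as M. cbv zeta in M.
  rewrite Rmin_left, Rmax_right in M by lra.
  destruct M as [c [Hc E]].
  - intros x Hx. apply Hd. lra.
  - intros x Hx. eapply cont_of_der. apply Hd. lra.
  - pose proof (Hn c ltac:(lra)). nra.
Qed.

Lemma vdot_pos_ne (u w : vec3) : u <> w -> 0 < vdot (vsub u w) (vsub u w).
Proof.
  intros H. destruct u as [[u1 u2] u3]; destruct w as [[w1 w2] w3].
  unfold vdot, vsub, vx, vy, vz; simpl.
  destruct (Req_dec (u1 - w1) 0); destruct (Req_dec (u2 - w2) 0); destruct (Req_dec (u3 - w3) 0);
  try nra.
  exfalso; apply H. f_equal; [f_equal|]; lra.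
Qed.

Lemma dot_dag u w s : u <> w -> vdot (vsub u w) (J_io_dag u w s) = s.
Proof.
  intros H. pose proof (vdot_pos_ne u w H) as Hp.
  unfold J_io_dag, vnorm.
  assert (E : sqrt (vdot (vsub u w) (vsub u w)) ^ 2 = vdot (vsub u w) (vsub u w)).
  { simpl. rewrite Rmult_1_r. apply sqrt_sqrt. lra. }
  rewrite E. revert Hp.
  destruct u as [[u1 u2] u3]; destruct w as [[w1 w2] w3].
  unfold vdot, vscale, vsub, vx, vy, vz; simpl. intros Hp. field. lra.
Qed.

Lemma vx_sub u w : vx (vsub u w) = vx u - vx w. Proof. reflexivity. Qed.
Lemma vy_sub u w : vy (vsub u w) = vy u - vy w. Proof. reflexivity. Qed.
Lemma vz_sub u w : vz (vsub u w) = vz u - vz w. Proof. reflexivity. Qed.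

Lemma g_deriv d lam b1 b2 r0 r1 r2 (p po vo : R -> vec3) t :
  is_deriv3 po (vo t) t -> is_deriv3 p (v_io d lam b1 b2 r0 r1 r2 (p t) (po t) (vo t)) t ->
  p t <> po t ->
  is_derive (fun s => rho_tilde d (p s) (po s)) t
    (- lam * phi b1 b2 r0 r1 r2 (rho_tilde d (p t) (po t))).
Proof.
  intros [Ho1 [Ho2 Ho3]] [Hp1 [Hp2 Hp3]] Hne.
  set (v := v_io d lam b1 b2 r0 r1 r2 (p t) (po t) (vo t)) in *.
  assert (key : vdot (vsub (p t) (po t)) v =
     lam * phi b1 b2 r0 r1 r2 (rho_tilde d (p t) (po t)) + vdot (vsub (p t) (po t)) (vo t)).
  { unfold v, v_io. cbv zeta. rewrite dot_dag by auto. unfold J_i_o, phi. ring. }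
  unfold vdot in key. rewrite !vx_sub, !vy_sub, !vz_sub in key.
  assert (Hd : is_derive (fun s => d ^ 2 / 2 - / 2 * (
     (vx (p s) - vx (po s)) * (vx (p s) - vx (po s)) +
     (vy (p s) - vy (po s)) * (vy (p s) - vy (po s)) +
     (vz (p s) - vz (po s)) * (vz (p s) - vz (po s)))) t
   (0 - / 2 * (((vx v - vx (vo t)) * (vx (p t) - vx (po t)) + (vx (p t) - vx (po t)) * (vx v - vx (vo t)))
    + ((vy v - vy (vo t)) * (vy (p t) - vy (po t)) + (vy (p t) - vy (po t)) * (vy v - vy (vo t)))
    + ((vz v - vz (vo t)) * (vz (p t) - vz (po t)) + (vz (p t) - vz (po t)) * (vz v - vz (vo t)))))).
  { apply D_minus; [apply D_const|]. apply D_scal.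
    assert (Ex : is_derive (fun s => vx (p s) - vx (po s)) t (vx v - vx (vo t))) by (apply D_minus; auto).
    assert (Ey : is_derive (fun s => vy (p s) - vy (po s)) t (vy v - vy (vo t))) by (apply D_minus; auto).
    assert (Ez : is_derive (fun s => vz (p s) - vz (po s)) t (vz v - vz (vo t))) by (apply D_minus; auto).
    apply D_plus; [apply D_plus|].
    - exact (D_mult _ _ t _ _ Ex Ex).
    - exact (D_mult _ _ t _ _ Ey Ey).
    - exact (D_mult _ _ t _ _ Ez Ez). }
  eapply D_ext; [exact Hd|]. lra.
Qed.

Lemma g_rc d (p po : R -> vec3) : right_cont3 p 0 -> right_cont3 po 0 ->
  filterlim (fun s => rho_tilde d (p s) (po s)) (at_right 0) (locally (rho_tilde d (p 0) (po 0))).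
Proof.
  intros [P1 [P2 P3]] [Q1 [Q2 Q3]].
  assert (X := L_minus _ _ _ _ P1 Q1).
  assert (Y := L_minus _ _ _ _ P2 Q2).
  assert (Z := L_minus _ _ _ _ P3 Q3).
  assert (H := L_minus _ _ _ _ (L_const (d ^ 2 / 2))
     (L_mult _ _ _ _ (L_const (/ 2)) (L_plus _ _ _ _ (L_plus _ _ _ _ (L_mult _ _ _ _ X X) (L_mult _ _ _ _ Y Y)) (L_mult _ _ _ _ Z Z)))).
  exact H.
Qed.

Lemma ball_R (x e y : R) : ball x e y <-> Rabs (y - x) < e.
Proof. reflexivity. Qed.

Theorem lemma2 (d lam b1 b2 r0 r1 r2 : R)
  (Hd : 0 < d) (Hlam : 0 < lam) (Hb1 : 0 < b1) (Hb2 : 0 < b2)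
  (Hr0 : 0 < r0) (Hr1 : 0 < r1) (Hr2 : 0 < r2)
  (Hr10 : r1 * r0 > 1) (Hr20 : r2 * r0 < 1) (Hr0int : 1 / 2 < r0 < 1) :
  exists Tmax : R, 0 < Tmax /\
  forall (p po vo : R -> vec3),
    (forall t, 0 < t -> is_deriv3 po (vo t) t) ->
    (forall t, 0 < t -> is_deriv3 p (v_io d lam b1 b2 r0 r1 r2 (p t) (po t) (vo t)) t) ->
    right_cont3 p 0 -> right_cont3 po 0 ->
    (forall t, 0 <= t -> p t <> po t) ->
    vnorm (vsub (p 0) (po 0)) <= d ->
    exists T : R, 0 < T <= Tmax /\
      forall t, T <= t ->
        d <= vnorm (vsub (p t) (po t)) /\ rho_tilde d (p t) (po t) = 0.
Proof.
  set (M := d ^ 2 / 2). set (a := r2 * r0). set (q := (1 - a) / 2).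
  set (K := Rpower b2 r0). set (c := (1 - a) * lam * K).
  set (T0 := Rpower (M * M) q / c).
  assert (HK : 0 < K) by apply Rpower_pos.
  assert (Hq : 0 < q) by (unfold q, a; lra).
  assert (Hc : 0 < c) by (unfold c, a; apply Rmult_lt_0_compat; [nra|lra]).
  assert (HT0 : 0 <= T0) by (unfold T0; pose proof (Rpower_pos (M*M) q);
     apply Rlt_le, Rdiv_lt_0_compat; lra).
  exists (T0 + 1). split; [lra|].
  intros p po vo Hpo Hp Hrcp Hrcpo Hne Hinit.
  set (g := fun s => rho_tilde d (p s) (po s)).
  set (h := fun s => g s * g s).
  set (dh := fun s => (- lam * phi b1 b2 r0 r1 r2 (g s)) * g s + g s * (- lam * phi b1 b2 r0 r1 r2 (g s))).
  assert (Hg : forall t, 0 < t -> is_derive g t (- lam * phi b1 b2 r0 r1 r2 (g t))).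
  { intros t Ht. apply (g_deriv d lam b1 b2 r0 r1 r2 p po vo); auto. apply Hne; lra. }
  assert (Hh : forall t, 0 < t -> is_derive h t (dh t)).
  { intros t Ht. exact (D_mult g g t _ _ (Hg t Ht) (Hg t Ht)). }
  assert (Hdh : forall t, 0 < t -> dh t <= 0).
  { intros t Ht. unfold dh. pose proof (phi_nonneg b1 b2 r0 r1 r2 (g t) Hb1 Hb2 Hr0). nra. }
  assert (Hmono : forall s t, 0 < s -> s <= t -> h t <= h s) by (apply mono with dh; auto).
  assert (Hg0 : 0 <= g 0 <= M).
  { unfold g, rho_tilde, rho_io, M. unfold vnorm in Hinit.
    set (D := vdot (vsub (p 0) (po 0)) (vsub (p 0) (po 0))) in *.
    assert (HD : 0 <= D) by (unfold D, vdot; nra).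
    pose proof (sqrt_sqrt D HD). pose proof (sqrt_pos D). simpl. nra. }
  assert (Hh0 : forall t, 0 < t -> h t <= h 0).
  { intros t Ht. apply Rnot_lt_le; intro Hlt.
    assert (L : filterlim h (at_right 0) (locally (h 0))).
    { unfold h. apply L_mult; apply g_rc; auto. }
    assert (He : 0 < h t - h 0) by lra.
    apply filterlim_locally with (eps := mkposreal _ He) in L.
    destruct L as [del Hdel]. simpl in Hdel.
    set (y := Rmin (del / 2) t).
    pose proof (cond_pos del) as Hdel0. assert (Hy0 : 0 < y) by (unfold y; apply Rmin_pos; lra).
    assert (Hyt : y <= t) by apply Rmin_r.
    assert (Hyd : y <= del / 2) by apply Rmin_l.
    assert (B : ball 0 del y).
    { apply ball_R. rewrite Rminus_0_r, Rabs_right by lra. pose proof (cond_pos del). lra. }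
    specialize (Hdel y B Hy0). assert (Hb : Rabs (h y - h 0) < h t - h 0) by exact Hdel. clear Hdel. rename Hb into Hdel.
    pose proof (Hmono y t Hy0 Hyt). apply Rabs_def2 in Hdel. destruct Hdel. lra. }
  set (T := T0 + 1).
  assert (HhT : h T = 0).
  { destruct (Req_dec (h T) 0) as [E|E]; [exact E|exfalso].
    assert (HhTp : 0 < h T) by (unfold h in *; pose proof (Rle_0_sqr (g T)); unfold Rsqr in *; lra).
    assert (Hpos : forall x, 1 <= x <= T -> 0 < h x).
    { intros x Hx. pose proof (Hmono x T ltac:(lra) ltac:(lra)). lra. }
    set (V := fun s => Rpower (h s) q).
    set (dV := fun s => q * Rpower (h s) (q - 1) * dh s).
    assert (HV : forall x, 1 <= x <= T -> is_derive V x (dV x)).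
    { intros x Hx. pose proof (Hpos x Hx) as Hx0.
      assert (P : is_derive (fun y => Rpower y q) (h x) (q * Rpower (h x) (q - 1))).
      { apply is_derive_Reals. apply derivable_pt_lim_power. exact Hx0. }
      pose proof (is_derive_comp (fun y => Rpower y q) h x _ _ P (Hh x ltac:(lra))) as C.
      eapply D_ext; [exact C|]. unfold dV. transitivity (dh x * (q * Rpower (h x) (q - 1))); [reflexivity|ring]. }
    pose proof (MVT_gen V 1 T dV) as MV. cbv zeta in MV.
    rewrite Rmin_left, Rmax_right in MV by (unfold T; lra).
    destruct MV as [xi [Hxi EV]].
    { intros x Hx. apply HV. lra. }
    { intros x Hx. eapply cont_of_der. apply HV. lra. }
    assert (HdV : dV xi <= - c).
    { pose proof (Hpos xi Hxi) as Hx0.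
      assert (Hgn : g xi <> 0) by (intro Z; unfold h in Hx0; rewrite Z in Hx0; lra).
      pose proof (phi_sign b1 b2 r0 r1 r2 (g xi) Hb1 Hb2 Hr0 Hgn) as S.
      fold K a in S. change (g xi * g xi) with (h xi) in S.
      assert (R1 : Rpower (h xi) (q - 1) * Rpower (h xi) ((1 + a) / 2) = 1).
      { rewrite <- Rpower_plus. replace (q - 1 + (1 + a) / 2) with 0 by (unfold q; field).
        apply Rpower_O; exact Hx0. }
      pose proof (Rpower_pos (h xi) (q - 1)).
      unfold dV, dh. fold (h xi).
      replace (- lam * phi b1 b2 r0 r1 r2 (g xi) * g xi + g xi * (- lam * phi b1 b2 r0 r1 r2 (g xi)))
        with (- 2 * lam * (g xi * phi b1 b2 r0 r1 r2 (g xi))) by ring.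
      unfold c.
      assert (q * Rpower (h xi) (q - 1) * (- 2 * lam * (g xi * phi b1 b2 r0 r1 r2 (g xi)))
        <= q * Rpower (h xi) (q - 1) * (- 2 * lam * (K * Rpower (h xi) ((1 + a) / 2)))).
      { apply Rmult_le_compat_l; [nra|]. nra. }
      replace ((1 - a) * lam * K) with (2 * q * lam * K) by (unfold q; field).
      replace (q * Rpower (h xi) (q - 1) * (- 2 * lam * (K * Rpower (h xi) ((1 + a) / 2))))
        with (- (2 * q * lam * K) * (Rpower (h xi) (q - 1) * Rpower (h xi) ((1 + a) / 2))) in H0 by ring.
      rewrite R1 in H0. lra. }
    assert (HV1 : V 1 <= Rpower (M * M) q).
    { unfold V. apply Rle_Rpower_l; [lra|]. split; [apply Hpos; unfold T; lra|].
      pose proof (Hh0 1 ltac:(lra)). unfold h in *. nra. }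
    assert (HVT : 0 < V T) by apply Rpower_pos.
    assert (Hprod : dV xi * (T - 1) <= - c * T0).
    { replace (T - 1) with T0 by (unfold T; ring). nra. }
    assert (Hc0 : c * T0 = Rpower (M * M) q) by (unfold T0; field; lra).
    lra. }
  exists T. split; [unfold T; lra|].
  intros t Ht.
  assert (Hht : h t <= 0).
  { destruct (Req_dec T t) as [<-|Hne']; [lra|]. rewrite <- HhT. apply Hmono; unfold T in *; lra. }
  assert (Hgt : g t = 0) by (unfold h in Hht; nra).
  split; [|exact Hgt].
  unfold g, rho_tilde, rho_io in Hgt. unfold vnorm.
  assert (E : vdot (vsub (p t) (po t)) (vsub (p t) (po t)) = d ^ 2) by lra.
  rewrite E, sqrt_pow2; lra.
Qed.
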